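(* In the one-step setting below, $$\|y_{t+1}-q(x_{t+1})\|_2\le\eta\,\big\|\nabla\varepsilon_t^{\rm OGD}(q(x_{t+1}))-\nabla\varepsilon_t^{\rm OMD}(y_{t+1})\big\|_2.$$
   Context: One-step setting. $\mathcal X,\mathcal Y\subset\mathbb R^d$ convex compact, $q:\mathcal X\to\mathcal Y$ a smooth bijection with Jacobian $J_q$, $D_R(x\|y)=R(x)-R(y)-\nabla R(y)^\top(x-y)$, and: (A1) There is a twice continuously differentiable, strictly convex $R:\mathcal Y\to\mathbb R$ such that $[\nabla^2R(q(x))]^{-1}=J_q(x)J_q(x)^\top$ for all $x\in\mathcal X$. (A2) There is $G>1$ such that: $q$ is $G$-Lipschitz on $\mathcal X$; the first and second derivatives of $q^{-1}$ are bounded by $G$; $R$ is $1$-strongly convex (Euclidean norm) and smooth with first and third derivatives bounded by $G$; for every $z\in\mathcal Y$ the map $w\mapsto D_R(z\|w)$ is $G$-Lipschitz. Fix $\eta>0$, $x_t\in\mathcal X$, $y_t:=q(x_t)$, $g_t\in\mathbb R^d$ with $\|g_t\|\le\hat G_F$, $\tilde g_t:=J_q(x_t)^{-\top}g_t$, $\tilde G_F:=G\hat G_F$. Define $y_{t+1}=\arg\min_{y\in\mathcal Y}\{\tilde g_t^\top(y-y_t)+\frac1\eta D_R(y\|y_t)\}$ and $x_{t+1}=\arg\min_{x\in\mathcal X}\{g_t^\top(x-x_t)+\frac1{2\eta}\|x-x_t\|_2^2\}$. Let $\mathcal Y_t:=\mathcal Y\cap\{y:\|y-y_t\|_2\le 2\eta\tilde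 G_F\}$, $\|v\|_A:=\sqrt{v^\top Av}$, $\Phi_t(y):=\tilde g_t^\top(y-y_t)+\frac1{2\eta}\|y-y_t\|^2_{\nabla^2R(y_t)}$, $\varepsilon_t^{\rm OMD}(y):=\frac1\eta\big(D_R(y\|y_t)-\frac12\|y-y_t\|^2_{\nabla^2R(y_t)}\big)$, $\varepsilon^q_t(y):=q^{-1}(y)-q^{-1}(y_t)-J_q(x_t)^{-1}(y-y_t)$, and $\varepsilon_t^{\rm OGD}(y):=g_t^\top\varepsilon^q_t(y)+\frac1\eta\big(\frac12\|\varepsilon^q_t(y)\|_2^2+\langle J_q(x_t)^{-1}(y-y_t),\varepsilon^q_t(y)\rangle\big)$. It is known that $y_{t+1}=\arg\min_{y\in\mathcal Y_t}\{\Phi_t+\varepsilon_t^{\rm OMD}\}$ and $q(x_{t+1})=\arg\min_{y\in\mathcal Y_t}\{\Phi_t+\varepsilon_t^{\rm OGD}\}$. *)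

(* Defs.v *)
(* Vectors of R^d are row vectors 'rV[R]_d;
   matrices act on vectors in the usual column convention via [mv]. *)
From HB Require Import structures.
From mathcomp Require Import all_boot all_order all_algebra.
From mathcomp Require Import all_classical all_reals all_analysis.
Set Implicit Arguments. Unset Strict Implicit. Unset Printing Implicit Defensive.
Import Order.TTheory GRing.Theory Num.Theory.
Import numFieldNormedType.Exports.
Local Open Scope classical_set_scope.
Local Open Scope ring_scope.

Section Defs.
Variables (R : realType) (d : nat).
Notation V := 'rV[R]_d.

Definition dotv (u v : V) : R := \sum_(i < d) u 0 i * v 0 i.
Definition enorm (v : V) : R := Num.sqrt (dotv v v).

Definition mv (A : 'M[R]_d) (v : V) : V := v *m A^T.

Definition sqnormA (A : 'M[R]_d) (v : V) : R := dotv v (mv A v).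

Definition evec (i : 'I_d) : V := delta_mx 0 i.

Definition grad (f : V -> R) (x : V) : V := \row_i ('d f x (evec i)).

Definition Jac (f : V -> V) (x : V) : 'M[R]_d :=
  \matrix_(i, j) ('d f x (evec j)) 0 i.

Definition hess (f : V -> R) (x : V) : 'M[R]_d := Jac (grad f) x.

Definition iterD (W : normedModType R) (vs : seq V) (f : V -> W) : V -> W :=
  foldr (fun v g => 'D_v g) f vs.

Definition smooth_on (W : normedModType R) (A : set V) (f : V -> W) :=
  forall (vs : seq V) (x : V), A x -> differentiable (iterD vs f) x.

Definition C2_on (A : set V) (f : V -> R) :=
  forall x, A x ->
    [/\ differentiable f x,
        (forall v : V, differentiable ('D_v f) x) &
        (forall u v : V, {for x, continuous ('D_u ('D_v f))})].

Definition strictly_convex_on (A : set V) (f : V -> R) :=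
  forall x y (t : R), A x -> A y -> x != y -> 0 < t < 1 ->
    f (t *: x + (1 - t) *: y) < t * f x + (1 - t) * f y.

Definition strongly_convex_on (mu : R) (A : set V) (f : V -> R) :=
  forall x y (t : R), A x -> A y -> 0 <= t <= 1 ->
    f (t *: x + (1 - t) *: y) <=
      t * f x + (1 - t) * f y - mu / 2 * t * (1 - t) * enorm (x - y) ^+ 2.

Definition lipschitz_on_V (A : set V) (f : V -> V) (L : R) :=
  forall x y, A x -> A y -> enorm (f x - f y) <= L * enorm (x - y).

Definition lipschitz_on_R (A : set V) (f : V -> R) (L : R) :=
  forall x y, A x -> A y -> `|f x - f y| <= L * enorm (x - y).

Definition bregman (Rf : V -> R) (x y : V) : R :=
  Rf x - Rf y - dotv (grad Rf y) (x - y).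

Definition is_argmin (A : set V) (f : V -> R) (z : V) :=
  A z /\ forall y, A y -> f z <= f y.

Section OneStep.
Variables (q qinv : V -> V) (Rf : V -> R) (G eta : R) (xt gt : V) (GF : R).

Definition yt : V := q xt.
Definition Jq : V -> 'M[R]_d := Jac q.
Definition gtil : V := mv (invmx (Jq xt))^T gt.
Definition GFt : R := G * GF.
Definition Yt (Y : set V) : set V :=
  [set y | Y y /\ enorm (y - yt) <= 2 * eta * GFt].
Definition Phi (y : V) : R :=
  dotv gtil (y - yt) + 1 / (2 * eta) * sqnormA (hess Rf yt) (y - yt).
Definition epsOMD (y : V) : R :=
  1 / eta * (bregman Rf y yt - 1 / 2 * sqnormA (hess Rf yt) (y - yt)).
Definition epsq (y : V) : V :=
  qinv y - qinv yt - mv (invmx (Jq xt)) (y - yt).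
Definition epsOGD (y : V) : R :=
  dotv gt (epsq y) +
  1 / eta * (1 / 2 * enorm (epsq y) ^+ 2 + dotv (mv (invmx (Jq xt)) (y - yt)) (epsq y)).
(* objectives defining y_{t+1} and x_{t+1} *)
Definition omd_obj (y : V) : R := dotv gtil (y - yt) + 1 / eta * bregman Rf y yt.
Definition ogd_obj (x : V) : R :=
  dotv gt (x - xt) + 1 / (2 * eta) * enorm (x - xt) ^+ 2.
End OneStep.
End Defs.

(* Main.v *)
Require Import Defs.
From HB Require Import structures.
From mathcomp Require Import all_boot all_order all_algebra.
From mathcomp Require Import all_classical all_reals all_analysis.
From mathcomp Require Import ring lra.
Import Order.TTheory GRing.Theory Num.Theory.
Import numFieldNormedType.Exports.
Local Open Scope classical_set_scope.
Local Open Scope ring_scope.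

Section H.
Variable R : realType.

Lemma dnbhs_right (P : R -> Prop) : (\forall h \near 0^', P h) -> \forall h \near 0^'+, P h.
Proof.
rewrite !near_withinE; apply: filterS => h Hh /= hp; apply: Hh.
by rewrite gt_eqF.
Qed.

Lemma quot_le (q : R -> R) (l m K : R) : q @ 0^' --> l ->
  (forall h, 0 < h <= 1 -> q h <= m + h * K) -> l <= m.
Proof.
move=> ql Hq.
have gl : (fun h => q h - h * K) @ 0^'+ --> l - 0 * K.
  apply: cvgB.
    move=> A /ql Hql; exact: (@dnbhs_right (fun h => A (q h)) Hql).
  apply: cvgMl. apply: cvg_at_right_filter. exact: cvg_id.
rewrite mul0r subr0 in gl.
apply: (cvgr_to_le gl).
near=> h. rewrite lerBlDr. apply: Hq. apply/andP; split.
  by near: h; exact: nbhs_right_gt.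
by near: h; apply: nbhs_right_le; exact: ltr01.
Unshelve. all: by end_near. Qed.
Lemma quot_ge (q : R -> R) (l m K : R) : q @ 0^' --> l ->
  (forall h, 0 < h <= 1 -> m + h * K <= q h) -> m <= l.
Proof.
move=> ql Hq; rewrite -lerN2.
apply: (@quot_le (fun h => - q h) _ _ (- K)); first exact: cvgN.
by move=> h /Hq; rewrite -lerN2 opprD mulrN.
Qed.
End H.
Section H2.
Variable R : realType.
Variable d : nat.
Notation V := 'rV[R]_d.
Implicit Types (u v w : V).

Lemma vec_sum (v : V) : v = \sum_(j < d) v 0 j *: evec R j.
Proof. exact: row_sum_delta. Qed.

Lemma dot_lin (L : {linear V -> R}) v : L v = dotv (\row_i L (evec R i)) v.
Proof.
rewrite {1}(vec_sum v) linear_sum /dotv; apply: eq_bigr => i _.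
by rewrite linearZ mxE /= mulrC.
Qed.

Lemma d_grad (f : V -> R) x v : 'd f x v = dotv (grad f x) v.
Proof. exact: dot_lin. Qed.

Lemma mv_jac (g : V -> V) x v : mv (Jac g x) v = 'd g x v.
Proof.
apply/rowP => i; rewrite /mv mxE.
rewrite {2}(vec_sum v) linear_sum summxE; apply: eq_bigr => j _.
by rewrite linearZ !mxE.
Qed.

Lemma deriv_cvg (W : normedModType R) (f : V -> W) a v : derivable f a v ->
  (fun h => h^-1 *: (f (h *: v + a) - f a)) @ 0^' --> 'D_v f a.
Proof. move=> H. exact: H. Qed.

Lemma dotvC u v : dotv u v = dotv v u.
Proof. by apply: eq_bigr => i _; rewrite mulrC. Qed.
Lemma dotvDl u w v : dotv (u + w) v = dotv u v + dotv w v.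
Proof. by rewrite /dotv -big_split; apply: eq_bigr => i _; rewrite mxE mulrDl. Qed.
Lemma dotvZl (k : R) u v : dotv (k *: u) v = k * dotv u v.
Proof. by rewrite /dotv mulr_sumr; apply: eq_bigr => i _; rewrite mxE mulrA. Qed.
Lemma dotvNl u v : dotv (- u) v = - dotv u v.
Proof. by rewrite -scaleN1r dotvZl mulN1r. Qed.
Lemma dotvBl u w v : dotv (u - w) v = dotv u v - dotv w v.
Proof. by rewrite dotvDl dotvNl. Qed.
Lemma dotvDr u w v : dotv v (u + w) = dotv v u + dotv v w.
Proof. by rewrite !(dotvC v) dotvDl. Qed.
Lemma dotvZr (k : R) u v : dotv v (k *: u) = k * dotv v u.
Proof. by rewrite !(dotvC v) dotvZl. Qed.
Lemma dotvNr u v : dotv v (- u) = - dotv v u.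
Proof. by rewrite !(dotvC v) dotvNl. Qed.
Lemma dotvBr u w v : dotv v (u - w) = dotv v u - dotv v w.
Proof. by rewrite !(dotvC v) dotvBl. Qed.
Lemma dotv_ge0 v : 0 <= dotv v v.
Proof. by apply: sumr_ge0 => i _; rewrite -expr2 sqr_ge0. Qed.
Lemma enorm_sq v : enorm v ^+ 2 = dotv v v.
Proof. by rewrite /enorm sqr_sqrtr // dotv_ge0. Qed.
Lemma enorm_ge0 v : 0 <= enorm v.
Proof. exact: sqrtr_ge0. Qed.

End H2.
Section D.
Variable R : realType.
Variable d : nat.
Notation V := 'rV[R]_d.
Implicit Types (u v w : V).

Lemma diff_coord (f : V -> V) x i : differentiable f x ->
  differentiable (fun y => f y 0 i) x.
Proof.
move=> df; have -> : (fun y => f y 0 i) = (fun N : V => N 0 i) \o f by [].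
apply: differentiable_comp => //; exact: differentiable_coord.
Qed.

Lemma diff_dot (f g : V -> V) x : differentiable f x -> differentiable g x ->
  differentiable (fun y => dotv (f y) (g y)) x.
Proof.
move=> df dg.
have -> : (fun y => dotv (f y) (g y)) = \sum_(i < d) (fun y => f y 0 i * g y 0 i).
  by rewrite fct_sumE; apply/funext => y.
apply: differentiable_sum => i.
have -> : (fun y => f y 0 i * g y 0 i) = (fun y => f y 0 i) * (fun y => g y 0 i) by [].
by apply: differentiableM; apply: diff_coord.
Qed.

Lemma diff_mv (M : 'M[R]_d) (f : V -> V) x : differentiable f x ->
  differentiable (fun y => mv M (f y)) x.
Proof.
move=> df.
have -> : (fun y => mv M (f y)) = \sum_(j < d) (fun y => f y 0 j *: row j M^T).
  rewrite fct_sumE; apply/funext => y; apply/rowP => i.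
  rewrite /mv mxE summxE; apply: eq_bigr => j _; by rewrite !mxE.
apply: differentiable_sum => j.
apply: (@differentiableZl _ _ _ (fun y => f y 0 j)); exact: diff_coord.
Qed.

End D.
Section C. Variable R : realType. Variable d : nat.
Lemma conv_in (Y : set 'rV[R]_d) x y (t : R) : convex_set Y -> Y x -> Y y -> 0 <= t <= 1 ->
  Y (t *: x + (1 - t) *: y).
Proof.
move=> cY Yx Yy /andP[t0 t1].
have P : Itv.spec (@Itv.num_sem R) (Itv.Real `[0%Z, 1%Z]) t.
  by rewrite /Itv.spec /Itv.num_sem /= in_itv /= t0 t1 ger0_real.
pose tt : {i01 R} := Itv.mk P.
have := cY x y tt. rewrite !inE. move=> /(_ Yx Yy). done.
Qed.
End C.
Section M.
Variable R : realType.
Variable d : nat.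
Notation V := 'rV[R]_d.
Implicit Types (u v w : V).

Lemma first_order (F : V -> R) y v : differentiable F y ->
  (forall h, 0 < h <= 1 -> F y <= F (h *: v + y)) -> 0 <= 'd F y v.
Proof.
move=> dF Hm; rewrite -deriveE //.
apply: (@quot_ge _ (fun h => h^-1 *: (F (h *: v + y) - F y)) _ 0 0).
  exact: (@deriv_cvg _ _ _ _ _ _ (diff_derivable dF)).
move=> h /andP[h0 h1]; rewrite mulr0 addr0.
apply: mulr_ge0; first by rewrite invr_ge0 ltW.
by rewrite subr_ge0 Hm // h0 h1.
Qed.

Lemma dot_cont c (f : R -> V) (F : set_system R) (FF : Filter F) l :
  f @ F --> l -> (fun h => dotv (f h) c) @ F --> dotv l c.
Proof.
move=> fl; apply: (@continuous_cvg _ _ _ _ _ f (fun u => dotv u c)) => //.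
apply: differentiable_continuous; apply: (@diff_dot _ _ id (cst c)) => //.
Qed.

Lemma sc_first (Rf : V -> R) (Y : set V) p p' : strongly_convex_on 1 Y Rf ->
  Y p -> Y p' -> differentiable Rf p' ->
  'd Rf p' (p - p') <= Rf p - Rf p' - 1/2 * dotv (p - p') (p - p').
Proof.
move=> sc Yp Yp' dF; rewrite -deriveE //.
set N := dotv (p - p') (p - p').
apply: (@quot_le _ (fun h => h^-1 *: (Rf (h *: (p - p') + p') - Rf p')) _ _ (1/2 * N)).
  exact: (@deriv_cvg _ _ _ _ _ _ (diff_derivable dF)).
move=> h /andP[h0 h1].
have := sc p p' h Yp Yp' (andb_true_intro (conj (ltW h0) h1)).
have -> : h *: p + (1 - h) *: p' = h *: (p - p') + p'.
  by rewrite scalerBr scalerBl scale1r addrCA [RHS]addrC.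
rewrite enorm_sq -/N => Hs.
rewrite -[_ *: _]/(h^-1 * _) mulrC ler_pdivrMr //.
have E : (Rf p - Rf p' - 1 / 2 * N + h * (1 / 2 * N)) * h =
  h * Rf p + (1 - h) * Rf p' - 1 / 2 * h * (1 - h) * N - Rf p' by ring.
by rewrite E lerBlDr subrK.
Qed.

Lemma mono (Rf : V -> R) (Y : set V) p p' : strongly_convex_on 1 Y Rf ->
  Y p -> Y p' -> differentiable Rf p -> differentiable Rf p' ->
  dotv (p - p') (p - p') <= dotv (grad Rf p - grad Rf p') (p - p').
Proof.
move=> sc Yp Yp' dp dp'.
have h1 := @sc_first _ _ _ _ sc Yp Yp' dp'.
have h2 := @sc_first _ _ _ _ sc Yp' Yp dp.
rewrite d_grad in h1; rewrite d_grad in h2.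
have E : p' - p = - (p - p') by rewrite opprB.
rewrite E dotvNl dotvNr dotvNr opprK in h2.
rewrite [X in _ <= X]dotvBl.
move: h1 h2; generalize (dotv (grad Rf p') (p - p')) (dotv (grad Rf p) (p - p'))
  (dotv (p - p') (p - p')) (Rf p) (Rf p') => B A N a b h1 h2.
lra.
Qed.


Lemma hess_lb (Rf : V -> R) (Y : set V) y0 a b :
  convex_set Y -> strongly_convex_on 1 Y Rf ->
  (forall y, Y y -> differentiable Rf y) ->
  differentiable (grad Rf) y0 -> Y y0 -> Y (y0 + a) -> Y (y0 + b) ->
  dotv (a - b) (a - b) <= dotv ('d (grad Rf) y0 (a - b)) (a - b).
Proof.
move=> cY sc dR dG Y0 Ya Yb.
set G := grad Rf.
set m := dotv (a - b) (a - b).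
have cv : (fun h => dotv (h^-1 *: (G (h *: a + y0) - G y0) - h^-1 *: (G (h *: b + y0) - G y0)) (a - b))
    @ 0^' --> dotv ('d G y0 (a - b)) (a - b).
  apply: dot_cont; rewrite linearB /= -!deriveE //.
  exact: (cvgB (@deriv_cvg _ _ _ _ _ _ (diff_derivable (v:=a) dG))
               (@deriv_cvg _ _ _ _ _ _ (diff_derivable (v:=b) dG))).
apply: (@quot_ge _ _ _ m 0 cv) => h /andP[h0 h1].
rewrite mulr0 addr0.
have Yh : forall c, Y (y0 + c) -> Y (h *: c + y0).
  move=> c Yc; have := @conv_in _ _ Y (y0 + c) y0 h cY Yc Y0 (andb_true_intro (conj (ltW h0) h1)).
  suff -> : h *: (y0 + c) + (1 - h) *: y0 = h *: c + y0 by [].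
  by apply/rowP => i; rewrite !mxE; ring.
have := @mono _ _ _ _ sc (Yh _ Ya) (Yh _ Yb) (dR _ (Yh _ Ya)) (dR _ (Yh _ Yb)).
have -> : h *: a + y0 - (h *: b + y0) = h *: (a - b).
  by rewrite opprD addrACA subrr addr0 scalerBr.
rewrite dotvZl dotvZr dotvZr -/m => H.
have -> : h^-1 *: (G (h *: a + y0) - G y0) - h^-1 *: (G (h *: b + y0) - G y0)
   = h^-1 *: (G (h *: a + y0) - G (h *: b + y0)).
  by rewrite -scalerBr opprB addrA subrK.
rewrite dotvZl.
rewrite ler_pM2l // in H.
rewrite -[X in X <= _](mulKf (lt0r_neq0 h0) m).
by rewrite ler_pM2l ?invr_gt0.
Qed.


Lemma quad_deriv (f : V -> R) y v (A B : R) : differentiable f y ->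
  (forall h, 0 < h -> f (h *: v + y) - f y = h * A + h * (h * B)) ->
  'd f y v = A.
Proof.
move=> df Hq; rewrite -deriveE //.
have cv := @deriv_cvg _ _ _ _ _ v (diff_derivable (v:=v) df).
have Eq : forall h, 0 < h <= 1 -> h^-1 *: (f (h *: v + y) - f y) = A + h * B.
  move=> h /andP[h0 _]; rewrite Hq // -mulrDr.
  by rewrite -[_ *: _]/(h^-1 * _) mulKf // lt0r_neq0.
apply/eqP; rewrite eq_le; apply/andP; split.
  by apply: (@quot_le _ _ _ A B cv) => h /Eq ->.
by apply: (@quot_ge _ _ _ A B cv) => h /Eq ->.
Qed.

Lemma dD (f g : V -> R) x : differentiable f x -> differentiable g x ->
  differentiable (fun y => f y + g y) x.
Proof. exact: differentiableD. Qed.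
Lemma dB (f g : V -> R) x : differentiable f x -> differentiable g x ->
  differentiable (fun y => f y - g y) x.
Proof. exact: differentiableB. Qed.
Lemma dBv (f g : V -> V) x : differentiable f x -> differentiable g x ->
  differentiable (fun y => f y - g y) x.
Proof. exact: differentiableB. Qed.
Lemma dcM (c : R) (f : V -> R) x : differentiable f x ->
  differentiable (fun y => c * f y) x.
Proof. move=> df; apply: (@differentiableM _ _ (cst c) f) => //. Qed.
Lemma dcst (c : R) x : differentiable (fun _ : V => c) x.
Proof. exact: differentiable_cst. Qed.
Lemma dcstv (c : V) x : differentiable (fun _ : V => c) x.
Proof. exact: differentiable_cst. Qed.
Lemma dsub (c : V) x : differentiable (fun y : V => y - c) x.
Proof. by apply: dBv; [have [] := @is_diff_id _ _ x | exact: dcstv]. Qed.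
Lemma den2 (f : V -> V) x : differentiable f x ->
  differentiable (fun y => enorm (f y) ^+ 2) x.
Proof.
move=> df; have -> : (fun y => enorm (f y) ^+ 2) = (fun y => dotv (f y) (f y)).
  by apply/funext => y; rewrite enorm_sq.
exact: diff_dot.
Qed.

Lemma ball_conv (a b : V) (r h : R) : enorm a <= r -> enorm b <= r -> 0 <= h <= 1 ->
  enorm (h *: b + (1 - h) *: a) <= r.
Proof.
move=> ha hb /andP[h0 h1].
have r0 : 0 <= r by exact: (le_trans (@enorm_ge0 _ _ a) ha).
have e0 := @enorm_ge0 _ _ (h *: b + (1 - h) *: a).
have E : enorm (h *: b + (1 - h) *: a) ^+ 2 =
  h ^+ 2 * dotv b b + 2 * h * (1 - h) * dotv a b + (1 - h) ^+ 2 * dotv a a.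
  rewrite enorm_sq !dotvDl !dotvDr !dotvZl !dotvZr (@dotvC _ _ b a); ring.
have Dab := @dotv_ge0 _ _ (a - b).
rewrite dotvBl !dotvBr (@dotvC _ _ b a) in Dab.
have Ea := @enorm_sq _ _ a; have Eb := @enorm_sq _ _ b.
have na0 := @enorm_ge0 _ _ a; have nb0 := @enorm_ge0 _ _ b.
move: E Dab Ea Eb ha hb e0 na0 nb0; generalize (enorm (h *: b + (1 - h) *: a)) (enorm a) (enorm b)
  (dotv a a) (dotv b b) (dotv a b) => e na nb A B C E Dab Ea Eb ha hb e0 na0 nb0.
have hA : A <= r ^+ 2 by rewrite -Ea; nra.
have hB : B <= r ^+ 2 by rewrite -Eb; nra.
have P : 0 <= h * (1 - h) * (A - C - (C - B)) by rewrite mulr_ge0 // mulr_ge0 // subr_ge0.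
have Q : e ^+ 2 <= r ^+ 2.
  have -> : e ^+ 2 = (1 - h) * A + h * B - h * (1 - h) * (A - C - (C - B)) by rewrite E; ring.
  have : (1 - h) * A <= (1 - h) * r ^+ 2 by rewrite ler_wpM2l // subr_ge0.
  have : h * B <= h * r ^+ 2 by rewrite ler_wpM2l.
  move: P; generalize (h * (1 - h) * (A - C - (C - B))) ((1 - h) * A) (h * B) => P1 X1 X2.
  move=> HP H2 H1; have -> : r ^+ 2 = (1 - h) * r ^+ 2 + h * r ^+ 2 by ring.
  lra.
nra.
Qed.

Lemma diff_junk (f : V -> V) x : ~ differentiable f x -> forall v, 'd f x v = 0.
Proof.
move=> nd v.
suff -> : 'd f x = point by [].
rewrite /diff; set P := (X in get X).
apply: getPN => df Pdf; apply: nd; apply/diffP.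
exact: (getPex (ex_intro P df Pdf)).
Qed.

Lemma mvD (M : 'M[R]_d) u w : mv M (u + w) = mv M u + mv M w.
Proof. by rewrite /mv mulmxDl. Qed.
Lemma mvZ (M : 'M[R]_d) (k : R) u : mv M (k *: u) = k *: mv M u.
Proof. by rewrite /mv scalemxAl. Qed.
Lemma mvN (M : 'M[R]_d) u : mv M (- u) = - mv M u.
Proof. by rewrite /mv mulNmx. Qed.

End M.
Lemma final_arith (R : realType) (g A Bq C E1 E2 N WW nu nW K eta : R) :
  0 <= - g + K * (- (A + Bq) - (C + Bq)) - E1 ->
  0 <= g + K * (A + C) + E2 -> N <= Bq ->
  0 <= eta * (eta * WW) - eta * (E2 - E1) - (eta * (E2 - E1) - N) ->
  nu ^+ 2 = N -> nW ^+ 2 = WW -> 0 <= nu -> 0 <= nW -> 0 < K ->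
  eta * (2 * K) = 1 -> 0 < eta -> nu <= eta * nW.
Proof.
move=> fo1 fo2 hb Ediff Eun EWn nu0 nW0 K0 KE eta0.
have EK : K * (- (A + Bq) - (C + Bq)) + K * (A + C) = - (2 * K * Bq) by ring.
have S : 2 * K * Bq <= E2 - E1.
  move: fo1 fo2 EK; generalize (K * (- (A + Bq) - (C + Bq))) (K * (A + C)) (2 * K * Bq).
  move=> a b c f1 f2 e; lra.
have S2' : 2 * K * N <= 2 * K * Bq by rewrite ler_pM2l // mulr_gt0.
have S2 := le_trans S2' S.
have S3 : N <= eta * (E2 - E1).
  have -> : N = eta * (2 * K * N) by rewrite mulrA KE mul1r.
  by rewrite (ler_pM2l eta0).
have S4 : N <= eta ^+ 2 * WW.
  rewrite expr2 -mulrA.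
  move: Ediff S3; generalize (eta * (eta * WW)) (eta * (E2 - E1)) => a b e1' e2'; lra.
have Hs : nu ^+ 2 <= (eta * nW) ^+ 2 by rewrite exprMn Eun EWn.
have p0 : 0 <= eta * nW by rewrite mulr_ge0 // ltW.
move: Hs p0 nu0; generalize (eta * nW) => p Hs p0 nu0'; nra.
Qed.

Theorem lemmaA4 (R : realType) (d : nat)
  (X Y : set 'rV[R]_d) (q qinv : 'rV[R]_d -> 'rV[R]_d) (Rf : 'rV[R]_d -> R)
  (G eta GF : R) (xt gt y1 x1 : 'rV[R]_d) :
  (* X, Y convex compact; q : X -> Y a smooth bijection with inverse qinv *)
  convex_set X -> convex_set Y -> compact X -> compact Y ->
  (forall x, X x -> Y (q x)) -> (forall y, Y y -> X (qinv y)) ->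
  (forall x, X x -> qinv (q x) = x) -> (forall y, Y y -> q (qinv y) = y) ->
  smooth_on X q ->
  (* (A1) *)
  C2_on Y Rf -> strictly_convex_on Y Rf ->
  (forall x, X x ->
     hess Rf (q x) \in unitmx /\
     invmx (hess Rf (q x)) = Jq q x *m (Jq q x)^T) ->
  (* (A2) *)
  1 < G ->
  lipschitz_on_V X q G ->
  (forall y, Y y -> differentiable qinv y /\
                    forall v, differentiable ('D_v qinv) y) ->
  (forall y u, Y y -> enorm ('D_u qinv y) <= G * enorm u) ->
  (forall y u v, Y y -> enorm ('D_u ('D_v qinv) y) <= G * enorm u * enorm v) ->
  strongly_convex_on 1 Y Rf -> smooth_on Y Rf ->
  (forall y u, Y y -> `|'D_u Rf y| <= G * enorm u) ->
  (forall y u v w, Y y ->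
     `|'D_u ('D_v ('D_w Rf)) y| <= G * enorm u * enorm v * enorm w) ->
  (forall z, Y z -> lipschitz_on_R Y (fun w => bregman Rf z w) G) ->
  (* the one-step setting *)
  0 < eta -> X xt -> enorm gt <= GF ->
  is_argmin Y (omd_obj q Rf eta xt gt) y1 ->
  is_argmin X (ogd_obj eta xt gt) x1 ->
  (* known facts *)
  is_argmin (Yt q G eta xt GF Y)
    (fun y => Phi q Rf eta xt gt y + epsOMD q Rf eta xt y) y1 ->
  is_argmin (Yt q G eta xt GF Y)
    (fun y => Phi q Rf eta xt gt y + epsOGD q qinv eta xt gt y) (q x1) ->
  (* conclusion *)
  enorm (y1 - q x1) <=
    eta * enorm (grad (epsOGD q qinv eta xt gt) (q x1)
                 - grad (epsOMD q Rf eta xt) y1).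
Proof.
move=> cX cY kX kY qXY qiYX qiq qqi smq C2 stc A1 G1 lipq dqi Dqi DDqi sc smR DR DDDR bl
  eta0 Xxt gtb am_omd am_ogd am1 am2.
have [d0|dpos] := posnP d.
  subst d; rewrite /enorm /dotv !big_ord0 sqrtr0 mulr0; exact: lexx.
have Yyt : Y (q xt) := qXY _ Xxt.
case: am1 => [[Yy1 By1] m1]; case: am2 => [[Yz Bz] m2].
set z := q x1 in Yz Bz m2 *.
have dRf : forall y, Y y -> differentiable Rf y by move=> y /C2 [].
have dG : differentiable (grad Rf) (q xt).
  have [//|ndG] := pselect (differentiable (grad Rf) (q xt)).
  exfalso; have [Hu _] := A1 xt Xxt.
  have H0 : hess Rf (q xt) = 0.
    by apply/matrixP => i j; rewrite !mxE (@diff_junk _ _ _ _ ndG) mxE.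
  rewrite H0 in Hu; have := mulmxV Hu; rewrite mul0mx.
  move=> /matrixP /(_ (Ordinal dpos) (Ordinal dpos)); rewrite !mxE eqxx /=.
  by move=> /eqP; rewrite eq_sym oner_eq0.
set H := hess Rf (q xt).
have dPhi : forall y, differentiable (Phi q Rf eta xt gt) y.
  move=> y; rewrite /Phi /sqnormA.
  apply: dD; first by apply: diff_dot; [exact: dcstv | exact: dsub].
  apply: dcM; apply: diff_dot; first exact: dsub.
  by apply: diff_mv; exact: dsub.
have de1 : differentiable (epsOMD q Rf eta xt) y1.
  rewrite /epsOMD /bregman /sqnormA.
  apply: dcM; apply: dB.
    apply: dB; first by apply: dB; [exact: dRf | exact: dcst].
    by apply: diff_dot; [exact: dcstv | exact: dsub].
  apply: dcM; apply: diff_dot; first exact: dsub.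
  by apply: diff_mv; exact: dsub.
have dq : differentiable (epsq q qinv xt) z.
  rewrite /epsq; apply: dBv; first by apply: dBv; [exact: (dqi _ Yz).1 | exact: dcstv].
  by apply: diff_mv; exact: dsub.
have de2 : differentiable (epsOGD q qinv eta xt gt) z.
  rewrite /epsOGD.
  apply: dD; first by apply: diff_dot; [exact: dcstv | exact: dq].
  apply: dcM; apply: dD; first by apply: dcM; exact: den2.
  apply: diff_dot; last exact: dq.
  by apply: diff_mv; exact: dsub.
have dPhiE : forall y v, 'd (Phi q Rf eta xt gt) y v = dotv (gtil q xt gt) v +
    1 / (2 * eta) * (dotv v (mv H (y - q xt)) + dotv (y - q xt) (mv H v)).
  move=> y v; apply: (@quad_deriv _ _ _ _ _ _ (1 / (2 * eta) * dotv v (mv H v)) (dPhi y)).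
  move=> h _; rewrite /Phi /sqnormA -/H.
  have -> : h *: v + y - yt q xt = (y - q xt) + h *: v by apply/rowP => i; rewrite !mxE /yt; ring.
  rewrite /yt; set w := y - q xt.
  rewrite mvD mvZ !dotvDl !dotvDr !dotvZl !dotvZr.
  generalize (dotv (gtil q xt gt) w) (dotv (gtil q xt gt) v)
    (dotv w (mv H w)) (dotv w (mv H v))
    (dotv v (mv H w)) (dotv v (mv H v)) => a1 a2 a3 a4 a5 a6.
  ring.
set r := 2 * eta * GFt G GF.
have Ytp : forall a b h, Y a -> Y b -> enorm (a - q xt) <= r -> enorm (b - q xt) <= r ->
    0 < h <= 1 -> Yt q G eta xt GF Y (h *: (b - a) + a).
  move=> a b h Ya Yb Ba Bb /andP[h0 h1]; split.
    have := @conv_in _ _ Y b a h cY Yb Ya (andb_true_intro (conj (ltW h0) h1)).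
    suff -> : h *: b + (1 - h) *: a = h *: (b - a) + a by [].
    by apply/rowP => i; rewrite !mxE; ring.
  have := @ball_conv _ _ (a - q xt) (b - q xt) r h Ba Bb (andb_true_intro (conj (ltW h0) h1)).
  suff -> : h *: (b - q xt) + (1 - h) *: (a - q xt) = h *: (b - a) + a - yt q xt by [].
  by apply/rowP => i; rewrite !mxE /yt; ring.
set e1 := epsOMD q Rf eta xt.
set e2 := epsOGD q qinv eta xt gt.
set P := Phi q Rf eta xt gt.
have fo1 : 0 <= 'd (P + e1) y1 (z - y1).
  apply: first_order; first exact: differentiableD.
  move=> h hh; exact: (m1 _ (Ytp _ _ _ Yy1 Yz By1 Bz hh)).
have fo2 : 0 <= 'd (P + e2) z (y1 - z).
  apply: first_order; first exact: differentiableD.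
  move=> h hh; exact: (m2 _ (Ytp _ _ _ Yz Yy1 Bz By1 hh)).
rewrite diffD // in fo1; rewrite diffD // in fo2.
have hb := @hess_lb _ _ Rf Y (q xt) (y1 - q xt) (z - q xt) cY sc dRf dG Yyt.
rewrite !(addrC (q xt)) !subrK in hb.
have {hb} hb := hb Yy1 Yz.
have Eu : y1 - q xt - (z - q xt) = y1 - z by apply/rowP => i; rewrite !mxE; ring.
rewrite Eu in hb.
rewrite -mv_jac -/(hess Rf (q xt)) -/H in hb.
rewrite /= dPhiE d_grad in fo1; rewrite /= dPhiE d_grad in fo2.
set u := y1 - z in hb fo2 *.
set w := z - q xt in fo2.
have Ezy : z - y1 = - u by rewrite /u opprB.
have Ey1 : y1 - q xt = w + u by apply/rowP => i; rewrite /w /u !mxE; ring.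
rewrite Ezy Ey1 in fo1; clearbody u w.
rewrite mvD mvN !dotvNl !dotvNr !dotvDl !dotvDr in fo1.
rewrite (@dotvC _ _ (mv H u) u) in hb.
set W := grad e2 z - grad e1 y1.
have EW : dotv W u = dotv (grad e2 z) u - dotv (grad e1 y1) u by rewrite dotvBl.
clearbody W.
have Ediff := @dotv_ge0 _ _ (eta *: W - u).
rewrite !dotvBl !dotvBr !dotvZl !dotvZr (@dotvC _ _ u W) EW in Ediff.
have Eun := @enorm_sq _ _ u; have EWn := @enorm_sq _ _ W.
have nu0 := @enorm_ge0 _ _ u; have nW0 := @enorm_ge0 _ _ W.
have K0 : 0 < 1 / (2 * eta) by rewrite divr_gt0 // mulr_gt0.
have KE : eta * (2 * (1 / (2 * eta))) = 1 by field; rewrite lt0r_neq0.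
move: fo1 fo2 hb Ediff Eun EWn nu0 nW0 K0 KE.
generalize (dotv (gtil q xt gt) u) (dotv u (mv H w)) (dotv u (mv H u)) (dotv w (mv H u))
  (dotv (grad e1 y1) u) (dotv (grad e2 z) u) (dotv u u) (dotv W W) (enorm u) (enorm W)
  (1 / (2 * eta)).
move=> g A Bq C E1 E2 N WW nu nW K fo1 fo2 hb Ediff Eun EWn nu0 nW0 K0 KE.
have EK : K * (- (A + Bq) - (C + Bq)) + K * (A + C) = - (2 * K * Bq) by ring.
apply: (@final_arith R g A Bq C E1 E2 N WW nu nW K eta) => //.
Qed.
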